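(* Let $G$ be a directed graph, let $a, b, k \geq 1$ be integers, and let $D$ be a well-linked set in $G$ of size $4(a+k)b$. If $G$ does not contain a family of $k$ directed cycles such that every vertex of $G$ is in at most two of the cycles, then there exist walks $P_1,\ldots,P_a$ in $G$ and sets $A_i, B_i \subseteq V(P_i)$ for $1 \leq i \leq a$ such that: (1) the family $\{P_1,\ldots,P_a\}$ is of congestion $2$; (2) the sets $A_1,B_1,\ldots,A_a,B_a$ each have size $b$ and are pairwise disjoint; (3) for every $1 \leq i \leq a$, all vertices of $A_i$ appear on $P_i$ before all vertices of $B_i$; (4) $\bigcup_{i=1}^a (A_i \cup B_i)$ is well-linked in $G$.
   Context: For $A,B\subseteq V(G)$ with $|A|=|B|$, a linkage from $A$ to $B$ is a set of $|A|$ pairwise vertex-disjoint directed paths each starting in $A$ and ending in $B$. A set $W\subseteq V(G)$ is well-linked if for all $A,B\subseteq W$ with $|A|=|B|$ there is a linkage from $A$ to $B$ in $G-(W\setminus(A\cup B))$. A family of walks is of congestion $c$ if every vertex is visited at most $c$ times in total by the walks (each visit counted separately). *)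

(* Defs.v *)
From mathcomp Require Import all_boot.
Set Implicit Arguments. Unset Strict Implicit. Unset Printing Implicit Defensive.

Section Digraph.
Variables (V : finType) (E : rel V).

Definition is_walk (p : seq V) : bool :=
  if p is x :: q then path E x q else false.

Definition is_dpath (p : seq V) : bool := is_walk p && uniq p.

Definition is_dcycle (c : seq V) : bool := [&& c != [::], uniq c & cycle E c].

(* Arc set of a cycle, used to identify cycles up to rotation. *)
Definition cycle_arcs (c : seq V) : {set V * V} :=
  [set e | (e.1 \in c) && (e.2 == next c e.1)].

Definition half_integral_cycle_packing (k : nat) (F : seq (seq V)) : Prop :=
  [/\ size F = k, all is_dcycle F, uniq (map cycle_arcs F)
    & forall v : V, count (fun c => v \in c) F <= 2].

Definition starts_ends_in (A B : {set V}) (p : seq V) : bool :=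
  if p is x :: q then (x \in A) && (last x q \in B) else false.

Definition linkage_in (X A B : {set V}) : Prop :=
  exists L : seq (seq V),
    [/\ size L = #|A|,
        forall p, p \in L ->
          [/\ is_dpath p, all (fun v => v \in X) p & starts_ends_in A B p] &
        forall i j, i < j < size L ->
          [disjoint (nth [::] L i) & (nth [::] L j)]].

Definition well_linked (W : {set V}) : Prop :=
  forall A B : {set V}, A \subset W -> B \subset W -> #|A| = #|B| ->
    linkage_in (~: (W :\: (A :|: B))) A B.

Definition congestion_le (c : nat) (P : seq (seq V)) : Prop :=
  forall v : V, \sum_(p <- P) count_mem v p <= c.

Definition before_on (p : seq V) (A B : {set V}) : Prop :=
  exists j, {subset A <= take j p} /\ {subset B <= drop j p}.
End Digraph.

(* Main.v *)
Require Import Defs.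
From mathcomp Require Import all_boot zify.
Set Implicit Arguments. Unset Strict Implicit. Unset Printing Implicit Defensive.

Section Link.
Variables (V : finType) (E : rel V).
Variables (S T : {set V}) (L : seq (seq V)).
Hypothesis Lsize : size L = #|S|.
Hypothesis Lpaths : forall p, p \in L -> is_dpath E p /\ starts_ends_in S T p.
Hypothesis Ldisj : forall i j, i < j < size L ->
          [disjoint (nth [::] L i) & (nth [::] L j)].

Definition pathOf x := nth [::] L (find (fun p => ohead p == Some x) L).
Definition endOf x := last x (pathOf x).

Lemma disjL i j : i < size L -> j < size L -> i != j ->
  [disjoint nth [::] L i & nth [::] L j].
Proof.
move=> hi hj; rewrite neq_ltn => /orP[h|h].
  by apply: Ldisj; rewrite h.
by rewrite disjoint_sym; apply: Ldisj; rewrite h.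
Qed.

Lemma L_nonempty p : p \in L -> p != [::].
Proof. by move=> /Lpaths[_]; case: p. Qed.

Lemma heads_uniq x0 : uniq [seq head x0 p | p <- L].
Proof.
apply/(uniqP x0) => i j; rewrite !inE size_map => hi hj.
rewrite !(nth_map [::]) //.
have [//|neq] := eqVneq i j.
have := disjL hi hj neq.
have hni := L_nonempty (mem_nth [::] hi).
have hnj := L_nonempty (mem_nth [::] hj).
move: hni hnj; case: (nth [::] L i) => [//|a s]; case: (nth [::] L j) => [//|c t] _ _ /=.
move=> /disjointFr h e; rewrite /= e in h; have := h c; rewrite !inE eqxx /=.
by move=> /(_ isT).
Qed.

Lemma has_start x : x \in S -> has (fun p => ohead p == Some x) L.
Proof.
move=> xS.
have U := heads_uniq x.
have sub : {subset [seq head x p | p <- L] <= S}.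
  move=> y /mapP[p pL ->]; have [_] := Lpaths pL.
  by case: p pL => [|a s] //= _ /andP[].
have hc : #|[seq head x p | p <- L]| = #|S|.
  by rewrite (card_uniqP U) size_map.
have := subset_cardP hc; rewrite (introT subsetP sub) => /(_ isT) eqS.
move: xS; rewrite -eqS => /mapP[p pL hp]; apply/hasP; exists p => //.
by move: (L_nonempty pL); case: p pL hp => //= a s _ -> _.
Qed.

Lemma pathOf_in x : x \in S -> pathOf x \in L.
Proof. by move=> /has_start h; apply: mem_nth; rewrite -has_find. Qed.

Lemma pathOf_head x : x \in S -> pathOf x = x :: behead (pathOf x).
Proof.
move=> /has_start h; have := nth_find [::] h; rewrite -/(pathOf x).
by case: (pathOf x) => //= a s /eqP[->].
Qed.

Lemma pathOf_walk x : x \in S -> is_walk E (pathOf x) /\ uniq (pathOf x).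
Proof. by move=> /pathOf_in /Lpaths [/andP[]]. Qed.

Lemma endOf_in x : x \in S -> endOf x \in T.
Proof.
move=> xS; have [_] := Lpaths (pathOf_in xS); rewrite /endOf (pathOf_head xS) /=.
by case/andP.
Qed.

Lemma endOf_mem x : x \in S -> endOf x \in pathOf x.
Proof.
move=> xS; rewrite /endOf; move: (pathOf_head xS).
by case: (pathOf x) => [|a s] //= [->]; apply: mem_last.
Qed.

Lemma pathOf_disj x y : x \in S -> y \in S -> x != y ->
  [disjoint pathOf x & pathOf y].
Proof.
move=> xS yS neq; apply: disjL; rewrite -?has_find ?has_start //.
apply: contra neq => /eqP e.
have := pathOf_head xS; have := pathOf_head yS; rewrite /pathOf e.
by move=> -> [] ->.
Qed.

Lemma endOf_inj : {in S &, injective endOf}.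
Proof.
move=> x y xS yS e; apply/eqP; apply/negPn/negP => neq.
have := pathOf_disj xS yS neq; move/disjointFr => /(_ (endOf y)).
rewrite -{1}e !endOf_mem //; by move=> /(_ isT).
Qed.

Lemma count_paths v Z : uniq Z -> {subset Z <= S} ->
  \sum_(z <- Z) count_mem v (pathOf z) <= 1.
Proof.
elim: Z => [|z Z IH]; first by rewrite big_nil.
rewrite /= big_cons => /andP[zZ uZ] sub.
have zS : z \in S by apply: sub; rewrite mem_head.
have sub' : {subset Z <= S} by move=> y yZ; apply: sub; rewrite inE yZ orbT.
have [vin|vout] := boolP (v \in pathOf z).
  rewrite big1_seq ?addn0.
    by rewrite count_uniq_mem ?leq_b1 //; case: (pathOf_walk zS).
  move=> y /andP[_ yZ]; apply/count_memPn.
  have yS := sub' _ yZ.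
  have neq : z != y by apply: contraNneq zZ => ->.
  by rewrite (disjointFr (pathOf_disj zS yS neq) vin).
by rewrite (count_memPn vout) add0n; apply: IH.
Qed.

End Link.

Lemma count_behead (T0 : eqType) (v : T0) s : count_mem v (behead s) <= count_mem v s.
Proof. by case: s => //= a s; rewrite leq_addl. Qed.

Section Walks.
Variables (V : finType) (E : rel V) (X Y : {set V}) (L1 L2 : seq (seq V)).
Hypothesis L1size : size L1 = #|X|.
Hypothesis L1paths : forall p, p \in L1 -> is_dpath E p /\ starts_ends_in X Y p.
Hypothesis L1disj : forall i j, i < j < size L1 ->
          [disjoint (nth [::] L1 i) & (nth [::] L1 j)].
Hypothesis L2size : size L2 = #|Y|.
Hypothesis L2paths : forall p, p \in L2 -> is_dpath E p /\ starts_ends_in Y X p.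
Hypothesis L2disj : forall i j, i < j < size L2 ->
          [disjoint (nth [::] L2 i) & (nth [::] L2 j)].
Hypothesis XY : [disjoint X & Y].

Local Notation pf := (pathOf L1).
Local Notation f := (endOf L1).
Local Notation qf := (pathOf L2).
Local Notation g := (endOf L2).

Definition hh v := if v \in X then g (f v) else v.
Definition Sw w := pf w ++ behead (qf (f w)).
Definition Tw w := behead (Sw w).
Definition Walk n w := w :: flatten [seq Tw u | u <- traject hh w n].
Definition Fv v w := count_mem v (pf w) + count_mem v (qf (f w)).

Lemma fY w : w \in X -> f w \in Y.
Proof. exact: (endOf_in L1size L1paths L1disj). Qed.

Lemma gX w : w \in Y -> g w \in X.
Proof. exact: (endOf_in L2size L2paths L2disj). Qed.

Lemma hX w : w \in X -> hh w \in X.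
Proof. by move=> wX; rewrite /hh wX gX ?fY. Qed.

Lemma hh_inj : injective hh.
Proof.
move=> u v; rewrite /hh.
have finj := endOf_inj L1size L1paths L1disj.
have ginj := endOf_inj L2size L2paths L2disj.
case: ifP => uX; case: ifP => vX.
- by move=> /ginj e; apply: finj => //; apply: e; apply: fY.
- by move=> e; move: vX; rewrite -e gX ?fY.
- by move=> e; move: uX; rewrite e gX ?fY.
- by [].
Qed.

Lemma iter_X i w : w \in X -> iter i hh w \in X.
Proof. by elim: i => // i IH wX; rewrite iterS hX ?IH. Qed.

Lemma pf_head w : w \in X -> pf w = w :: behead (pf w).
Proof. exact: (pathOf_head L1size L1paths L1disj). Qed.

Lemma qf_head w : w \in Y -> qf w = w :: behead (qf w).
Proof. exact: (pathOf_head L2size L2paths L2disj). Qed.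

Lemma last_pf w : w \in X -> last w (behead (pf w)) = f w.
Proof. by move=> wX; rewrite /endOf {2}(pf_head wX). Qed.

Lemma last_qf w : w \in Y -> last w (behead (qf w)) = g w.
Proof. by move=> wY; rewrite /endOf {2}(qf_head wY). Qed.

Lemma Sw_eq w : w \in X -> Sw w = w :: Tw w.
Proof. by move=> wX; rewrite /Tw /Sw (pf_head wX). Qed.

Lemma Tw_eq w : w \in X -> Tw w = behead (pf w) ++ behead (qf (f w)).
Proof. by move=> wX; rewrite /Tw /Sw (pf_head wX). Qed.

Lemma Tw_path w : w \in X -> path E w (Tw w).
Proof.
move=> wX; rewrite (Tw_eq wX) cat_path (last_pf wX).
have [w1 _] := pathOf_walk L1size L1paths L1disj wX.
have [w2 _] := pathOf_walk L2size L2paths L2disj (fY wX).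
move: w1 w2; rewrite {1}(pf_head wX) {1}(qf_head (fY wX)) /= => -> ->.
by [].
Qed.

Lemma Tw_last w : w \in X -> last w (Tw w) = hh w.
Proof. by move=> wX; rewrite (Tw_eq wX) last_cat (last_pf wX) (last_qf (fY wX)) /hh wX. Qed.

Lemma h_in_Tw w : w \in X -> hh w \in Tw w.
Proof.
move=> wX; rewrite -(Tw_last wX); rewrite (Tw_eq wX).
case e: (behead (pf w)) => [|a s].
  exfalso; have := last_pf wX; rewrite e /= => ew.
  have := fY wX; rewrite -ew => wY.
  by move: XY => /disjointFr /(_ wX); rewrite wY.
by rewrite /= mem_last.
Qed.

Lemma count_Sw v w : count_mem v (Sw w) <= Fv v w.
Proof. by rewrite /Sw count_cat leq_add2l count_behead. Qed.

Lemma count_Tw v w : count_mem v (Tw w) <= Fv v w.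
Proof. exact: leq_trans (count_behead _ _) (count_Sw v w). Qed.

Lemma W1 n w : w \in X -> path E w (flatten [seq Tw u | u <- traject hh w n]).
Proof.
elim: n w => // n IH w wX; rewrite /= cat_path Tw_path // Tw_last //.
exact: IH (hX wX).
Qed.

Lemma W2 n w : w \in X -> last w (flatten [seq Tw u | u <- traject hh w n]) = iter n hh w.
Proof.
elim: n w => // n IH w wX; rewrite /= last_cat Tw_last // IH ?hX //.
by rewrite -iterSr.
Qed.

Lemma W3aux v n w : count_mem v (flatten [seq Tw u | u <- traject hh w n])
   <= \sum_(u <- traject hh w n) Fv v u.
Proof.
elim: n w => [|n IH] w; first by rewrite big_nil.
by rewrite /= big_cons count_cat leq_add ?count_Tw ?IH.
Qed.

Lemma W3 v n w : w \in X -> count_mem v (Walk n.+1 w)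
   <= \sum_(u <- traject hh w n.+1) Fv v u.
Proof.
move=> wX; rewrite /Walk.
have -> : count_mem v (w :: flatten [seq Tw u | u <- traject hh w n.+1]) =
  count_mem v (Sw w) + count_mem v (flatten [seq Tw u | u <- traject hh (hh w) n]).
  by rewrite (Sw_eq wX) /= count_cat addnA.
by rewrite big_cons leq_add ?count_Sw ?W3aux.
Qed.

Lemma W5 n i w : w \in X -> i < n ->
  iter i.+1 hh w \in flatten [seq Tw u | u <- traject hh w n].
Proof.
elim: n i w => // n IH [|i] w wX hi; rewrite /= mem_cat.
  by rewrite h_in_Tw.
by rewrite -!iterS iterSr IH ?orbT ?hX.
Qed.

Lemma Walk_split n1 n2 w : Walk (n1 + n2) w =
  Walk n1 w ++ flatten [seq Tw u | u <- traject hh (iter n1 hh w) n2].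
Proof. by rewrite /Walk trajectD map_cat flatten_cat. Qed.

Lemma flatten_sum (T0 : Type) (G : T0 -> seq V) (H : V -> nat) (Zs : seq T0) :
  \sum_(u <- flatten [seq G z | z <- Zs]) H u = \sum_(z <- Zs) \sum_(u <- G z) H u.
Proof. by rewrite big_flatten big_map. Qed.

Lemma cong (Zs : seq V) (len : V -> nat) v :
  (forall z, z \in Zs -> 0 < len z) ->
  uniq (flatten [seq traject hh z (len z) | z <- Zs]) ->
  {subset flatten [seq traject hh z (len z) | z <- Zs] <= X} ->
  \sum_(z <- Zs) count_mem v (Walk (len z) z) <= 2.
Proof.
move=> lpos U sub.
apply: (@leq_trans (\sum_(z <- Zs) \sum_(u <- traject hh z (len z)) Fv v u)).
  rewrite big_seq [X in _ <= X]big_seq; apply: leq_sum => z zZ.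
  have := lpos z zZ; case e: (len z) => [//|n] _.
  apply: W3; apply: sub; apply/flattenP; exists (traject hh z (len z)).
    by apply: map_f.
  by rewrite e inE eqxx.
rewrite -flatten_sum /Fv big_split /=.
set Zall := flatten _ in U sub *.
have c1 := count_paths L1size L1paths L1disj v U sub.
have U2 : uniq (map f Zall).
  rewrite map_inj_in_uniq //; move=> x y /sub xX /sub yX.
  exact: (endOf_inj L1size L1paths L1disj).
have sub2 : {subset map f Zall <= Y} by move=> y /mapP[x /sub xX ->]; apply: fY.
have c2 := count_paths L2size L2paths L2disj v U2 sub2.
rewrite big_map in c2.
by rewrite -[2]/(1 + 1) leq_add.
Qed.

Lemma seg_before b' z : z \in X ->
  {subset [set y in traject hh z b'.+1] <= take (size (Walk b' z)) (Walk (b'.+1 + b'.+1) z)} /\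
  {subset [set y in traject hh (iter b'.+1 hh z) b'.+1] <=
     drop (size (Walk b' z)) (Walk (b'.+1 + b'.+1) z)}.
Proof.
move=> zX; have -> : b'.+1 + b'.+1 = b' + b'.+2 by rewrite addSnnS.
rewrite Walk_split take_size_cat ?drop_size_cat //; split.
  move=> y; rewrite inE => /trajectP [[|i] hi ->]; first exact: mem_head.
  by rewrite /Walk inE W5 ?orbT.
move=> y; rewrite inE => /trajectP [i hi ->].
rewrite -iterD addnS -addSn iterD; apply: W5; first exact: iter_X.
by rewrite ltnS ltnW.
Qed.

End Walks.
Section Orb.
Variables (V : finType) (h : V -> V).
Hypothesis injh : injective h.

Lemma flatten_segs m y q s :
  flatten [seq traject h z m | z <- [seq iter (m * t) h y | t <- iota s q]] =
  traject h (iter (m * s) h y) (m * q).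
Proof.
elim: q s => [|q IH] s; first by rewrite muln0.
by rewrite /= IH (mulnS m q) trajectD (mulnS m s) iterD.
Qed.

Lemma orbit_closed (S : {set V}) x y : (forall z, z \in S -> h z \in S) ->
  x \in S -> y \in orbit h x -> y \in S.
Proof.
move=> cl xS /trajectP [i _ ->]; elim: i => [//|i IH].
by rewrite iterS; apply: cl.
Qed.

Lemma orbit_split m : 0 < m -> forall S : {set V},
  (forall x, x \in S -> h x \in S) ->
  exists R Z : seq V,
  [/\ uniq (flatten [seq orbit h r | r <- R]),
      uniq (flatten [seq traject h z m | z <- Z]),
      {subset flatten [seq orbit h r | r <- R] <= S},
      {subset flatten [seq traject h z m | z <- Z] <= S}
    & #|S| <= m * (size R + size Z)].
Proof.
move=> m0 S; move: {2}#|S| (leqnn #|S|) => n; elim: n S => [|n IH] S hS cl.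
  exists [::], [::]; split => //; lia.
have [S0|[x xS]] := set_0Vmem S.
  exists [::], [::]; rewrite S0 cards0; split => //.
set Os := [set y in orbit h x].
have OsS : Os \subset S by apply/subsetP => y; rewrite inE; apply: orbit_closed.
have xOs : x \in Os by rewrite inE in_orbit.
set S' := S :\: Os.
have cS' : #|S'| <= n.
  have : #|S'| < #|S|.
    apply: proper_card; apply/properP; split; first exact: subsetDl.
    by exists x => //; rewrite inE xOs.
  lia.
have cl' : forall z, z \in S' -> h z \in S'.
  move=> z; rewrite !inE => /andP[zO zS]; rewrite cl // andbT.
  apply: contra zO; rewrite -!fconnect_orbit => hxz.
  apply: connect_trans hxz _; rewrite fconnect_sym //; exact: fconnect1.
have [R' [Z' [uR uZ sR sZ cnt]]] := IH S' cS' cl'.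
set q := order h x %/ m.
exists (x :: R'), ([seq iter (m * t) h x | t <- iota 0 q] ++ Z').
have pre : {subset traject h x (m * q) <= orbit h x}.
  move=> y /trajectP [i hi ->]; rewrite -fconnect_orbit; exact: fconnect_iter.
have pu : uniq (traject h x (m * q)).
  rewrite -(@take_traject _ h (order h x) (m * q) x); last by rewrite /q mulnC leq_divM.
  by apply: take_uniq; apply: orbit_uniq.
have notO : forall y, y \in S' -> y \notin orbit h x.
  by move=> y; rewrite !inE => /andP[].
split.
- rewrite /= cat_uniq orbit_uniq uR andbT /=; apply/hasPn => y /sR /notO //.
- rewrite map_cat flatten_cat flatten_segs muln0 /= cat_uniq pu uZ andbT.
  by apply/hasPn => y /sZ /notO; apply: contra; apply: pre.
- move=> y; rewrite /= mem_cat => /orP[yO|/sR]; last by rewrite inE => /andP[].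
  by apply: orbit_closed yO.
- move=> y; rewrite map_cat flatten_cat flatten_segs muln0 mem_cat => /orP[yO|/sZ].
    by apply: orbit_closed (pre _ yO).
  by rewrite inE => /andP[].
- have : #|S| = #|Os| + #|S'|.
    by rewrite -(cardsID Os S) (setIidPr OsS).
  have -> : #|Os| = order h x by rewrite cardsE (card_uniqP (orbit_uniq _ _)) size_orbit.
  rewrite /= size_cat size_map size_iota.
  have := ltn_ceil (order h x) m0; rewrite -/q.
  nia.
Qed.
End Orb.

Section Helpers.
Variables (V : finType) (E : rel V).

Lemma disjI (A B : {pred V}) :
  (forall x, x \in A -> x \in B -> False) -> [disjoint A & B].
Proof.
move=> H; rewrite disjoint_subset; apply/subsetP => x xA.
by rewrite inE /=; apply/negP => xB; apply: H xA xB.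
Qed.

Lemma cyc_ok r u : path E r (rcons u r) ->
  is_dcycle E (r :: shorten r u) /\ {subset r :: shorten r u <= r :: rcons u r}.
Proof.
rewrite rcons_path => /andP[pu]; case: (shortenP pu) => p' pp' up' sub' el.
split; first by rewrite /is_dcycle up' /= rcons_path pp' el.
move=> y; rewrite inE => /orP[/eqP->|/sub' yu]; first exact: mem_head.
by rewrite inE mem_rcons inE yu !orbT.
Qed.

Lemma split_last (r : V) s : s != [::] -> s = rcons (behead (belast r s)) (last r s).
Proof. by case: s => //= y t _; rewrite -lastI. Qed.

Lemma uniq_of_flatten (G : V -> seq V) (l : seq V) :
  uniq (flatten [seq G x | x <- l]) -> (forall x, x \in l -> x \in G x) -> uniq l.
Proof.
elim: l => //= x l IH; rewrite cat_uniq => /and3P[_ hn ul] hG.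
rewrite (IH ul) ?andbT; last by move=> y yl; apply: hG; rewrite inE yl orbT.
apply/negP => xl.
have H1 : x \in flatten [seq G y | y <- l].
  by apply/flattenP; exists (G x); [apply: map_f | apply: hG; rewrite inE xl orbT].
by have := hasPn hn x H1; rewrite hG ?mem_head.
Qed.

Lemma flatten_disj (ss : seq (seq V)) i j : uniq (flatten ss) ->
  i < size ss -> j < size ss -> i != j -> [disjoint nth [::] ss i & nth [::] ss j].
Proof.
elim: ss i j => // s ss IH [|i] [|j] //=; rewrite cat_uniq => /and3P[_ hn u] hi hj neq.
- apply: disjI => x xs xj.
  have H1 : x \in flatten ss by apply/flattenP; exists (nth [::] ss j) => //; apply: mem_nth.
  by have := hasPn hn x H1; rewrite xs.
- apply: disjI => x xi xs.
  have H1 : x \in flatten ss by apply/flattenP; exists (nth [::] ss i) => //; apply: mem_nth.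
  by have := hasPn hn x H1; rewrite xs.
- by apply: IH.
Qed.

Lemma uniq_nth_flatten (ss : seq (seq V)) i : uniq (flatten ss) -> uniq (nth [::] ss i).
Proof.
elim: ss i => [|s ss IH] [|i] //=; rewrite cat_uniq => /and3P[us _ u] //.
exact: IH.
Qed.

Lemma wl_sub (W W' : {set V}) : W' \subset W -> well_linked E W -> well_linked E W'.
Proof.
move=> sWW wl A B sA sB cAB.
have [L [h1 h2 h3]] := wl A B (subset_trans sA sWW) (subset_trans sB sWW) cAB.
exists L; split => // p pL; have [q1 q2 q3] := h2 p pL; split => //.
apply/allP => v /(allP q2); rewrite !inE; apply: contra => /andP[-> /=].
exact: (subsetP sWW).
Qed.

Lemma count_le_sum (P : pred V) (G : V -> nat) l :
  (forall x, x \in l -> P x -> 0 < G x) -> count P l <= \sum_(x <- l) G x.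
Proof.
elim: l => [|x l IH] H; first by rewrite big_nil.
rewrite /= big_cons leq_add ?IH //; last by move=> y yl; apply: H; rewrite inE yl orbT.
by case: (boolP (P x)) => // px; apply: H => //; rewrite mem_head.
Qed.

End Helpers.

Lemma arith1 a b k r z : 0 < b -> r < k -> 2*(a+k)*b <= (b+b)*(r+z) -> a <= z.
Proof.
move=> b0 rk; have -> : 2*(a+k)*b = (b+b)*(a+k) by lia.
rewrite leq_pmul2l; last by lia.
lia.
Qed.

Theorem lemma15 (V : finType) (E : rel V) (a b k : nat) (D : {set V}) :
  1 <= a -> 1 <= b -> 1 <= k ->
  well_linked E D -> #|D| = 4 * (a + k) * b ->
  ~ (exists F : seq (seq V), half_integral_cycle_packing E k F) ->
  exists (P : 'I_a -> seq V) (A B : 'I_a -> {set V}),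
    [/\ forall i, is_walk E (P i) /\
                   ({subset A i <= P i} /\ {subset B i <= P i}),
        congestion_le 2 [seq P i | i : 'I_a],
        (forall i, #|A i| = b /\ #|B i| = b) /\
        (forall i j, [disjoint A i & B j] /\
                     (i != j -> [disjoint A i & A j] /\ [disjoint B i & B j])),
        forall i, before_on (P i) (A i) (B i)
      & well_linked E (\bigcup_(i < a) (A i :|: B i))].
Proof.
move=> a1 b1 k1 wlD cD nopack.
set N := 2 * (a + k) * b.
have eD : size (enum D) = N + N by rewrite -cardE cD /N; lia.
have uD : uniq (enum D) := enum_uniq (mem D).
set X := [set x in take N (enum D)].
set Y := [set x in drop N (enum D)].
have cX : #|X| = N by rewrite cardsE (card_uniqP (take_uniq _ uD)) size_takel // eD leq_addr.
have cY : #|Y| = N by rewrite cardsE (card_uniqP (drop_uniq _ uD)) size_drop eD addnK.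
have XD : X \subset D by apply/subsetP => x; rewrite inE => /mem_take; rewrite mem_enum.
have YD : Y \subset D by apply/subsetP => x; rewrite inE => /mem_drop; rewrite mem_enum.
have XY : [disjoint X & Y].
  apply: disjI => x; rewrite !inE => xt xd.
  move: uD; rewrite -(cat_take_drop N (enum D)) cat_uniq => /and3P[_ /hasPn H _].
  by have := H x xd; rewrite /= xt.
have [L1 [s1 p1' d1]] := wlD X Y XD YD (etrans cX (esym cY)).
have p1 : forall p, p \in L1 -> is_dpath E p /\ starts_ends_in X Y p by move=> p /p1' [].
have [L2 [s2 p2' d2]] := wlD Y X YD XD (etrans cY (esym cX)).
have p2 : forall p, p \in L2 -> is_dpath E p /\ starts_ends_in Y X p by move=> p /p2' [].
set h := hh X L1 L2.
have hinj : injective h := hh_inj s1 p1 d1 s2 p2 d2.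
have hX' : forall x, x \in X -> h x \in X := hX s1 p1 d1 s2 p2 d2.
have b0 : 0 < b + b by lia.
have [R [Z [uR uZ sR sZ cnt]]] := orbit_split hinj b0 hX'.
rewrite cX in cnt.
case: (leqP k (size R)) => hk.
  exfalso; apply: nopack.
  set Rk := take k R.
  have eR : flatten [seq orbit h r | r <- R] =
     flatten [seq orbit h r | r <- Rk] ++ flatten [seq orbit h r | r <- drop k R].
    by rewrite -{1}(cat_take_drop k R) map_cat flatten_cat.
  have uRk : uniq (flatten [seq orbit h r | r <- Rk]).
    by move: uR; rewrite eR cat_uniq => /andP[].
  have sRk : {subset flatten [seq orbit h r | r <- Rk] <= X}.
    by move=> y yR; apply: sR; rewrite eR mem_cat yR.
  have inRk : forall r, r \in Rk -> r \in X.
    move=> r rR; apply: sRk; apply/flattenP; exists (orbit h r).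
      exact: map_f.
    exact: in_orbit.
  pose sr r := flatten [seq Tw L1 L2 u | u <- traject h r (order h r)].
  have srE : forall r, r \in X -> sr r = rcons (behead (belast r (sr r))) r.
    move=> r rX.
    have ne : sr r != [::].
      apply/negP => /eqP e.
      have := W5 s1 p1 d1 s2 p2 d2 XY (n := order h r) (i := 0) rX (order_gt0 _ _).
      by rewrite -/h -/(sr r) e.
    rewrite {1}(split_last r ne); congr rcons.
    by rewrite /sr (W2 s1 p1 d1 s2 p2 d2) // iter_order.
  pose cyc r := r :: shorten r (behead (belast r (sr r))).
  have cycP : forall r, r \in X ->
      is_dcycle E (cyc r) /\ {subset cyc r <= Walk X L1 L2 (order h r) r}.
    move=> r rX.
    have := @cyc_ok V E r (behead (belast r (sr r))).
    rewrite -srE //.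
    move=> /(_ (W1 s1 p1 d1 s2 p2 d2 (order h r) rX)) [dc sub]; split => //.
  have cg : forall v, \sum_(r <- Rk) count_mem v (Walk X L1 L2 (order h r) r) <= 2.
    move=> v; apply: (cong s1 p1 d1 s2 p2 d2).
    - by move=> z _; apply: order_gt0.
    - exact: uRk.
    - exact: sRk.
  have uRk' : uniq Rk by apply: (uniq_of_flatten uRk) => r _; apply: in_orbit.
  have c2 : forall r, r \in X -> 2 <= count_mem r (Walk X L1 L2 (order h r) r).
    move=> r rX; change (2 <= count_mem r (r :: sr r)).
    rewrite /= eqxx /= ltnS -has_count has_pred1 (srE r rX) mem_rcons mem_head //.
  exists [seq cyc r | r <- Rk]; split.
  - by rewrite size_map size_takel.
  - by apply/allP => c /mapP [r rR ->]; apply: (cycP r (inRk r rR)).1.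
  - rewrite -map_comp map_inj_in_uniq // => r r' rR r'R /= e.
    apply/eqP; apply/negPn/negP => neq.
    have rX := inRk r rR; have r'X := inRk r' r'R.
    have : (r, next (cyc r) r) \in cycle_arcs (cyc r) by rewrite inE /= mem_head eqxx.
    rewrite e inE /= => /andP[rin _].
    have c1 : 0 < count_mem r (Walk X L1 L2 (order h r') r').
      by rewrite -has_count has_pred1; apply: (cycP r' r'X).2.
    have r'rem : r' \in rem r Rk by rewrite (mem_rem_uniq r uRk') inE eq_sym neq r'R.
    move: (cg r) (c2 r rX) c1; rewrite (big_rem r rR) (big_rem r' r'rem).
    move=> H1 H2 H3.
    by have := leq_trans (leq_add H2 (leq_add H3 (leq0n _))) H1.
  - move=> v; rewrite count_map; apply: leq_trans (cg v); apply: count_le_sum => r rR vin.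
    have vW : v \in Walk X L1 L2 (order h r) r by apply: (cycP r (inRk r rR)).2.
    by rewrite -has_count has_pred1.
have hZ : a <= size Z by apply: (arith1 b1 hk cnt).
set Zs := take a Z.
have sZs : size Zs = a by rewrite size_takel.
have eZ : flatten [seq traject h z (b + b) | z <- Z] =
   flatten [seq traject h z (b + b) | z <- Zs] ++
   flatten [seq traject h z (b + b) | z <- drop a Z].
  by rewrite -{1}(cat_take_drop a Z) map_cat flatten_cat.
have uZs : uniq (flatten [seq traject h z (b + b) | z <- Zs]).
  by move: uZ; rewrite eZ cat_uniq => /andP[].
have sZs' : {subset flatten [seq traject h z (b + b) | z <- Zs] <= X}.
  by move=> y yR; apply: sZ; rewrite eZ mem_cat yR.
have [b' eb] : exists b', b = b'.+1 by exists b.-1; rewrite prednK.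
have [z0 _] : exists z0 : V, z0 \in Zs.
  by move: sZs a1; case: (Zs) => [|z t] /= => [<- //|_ _]; exists z; rewrite mem_head.
pose zi (i : 'I_a) := nth z0 Zs i.
have ziZ : forall i : 'I_a, zi i \in Zs by move=> i; apply: mem_nth; rewrite sZs.
have segi : forall i : 'I_a,
   nth [::] [seq traject h z (b + b) | z <- Zs] i = traject h (zi i) (b + b).
  by move=> i; rewrite (nth_map z0) ?sZs.
have ziX : forall i, zi i \in X.
  move=> i; apply: sZs'; apply/flattenP; exists (traject h (zi i) (b + b)).
    exact: map_f.
  by rewrite eb addSn /= inE eqxx.
have useg : forall i : 'I_a, uniq (traject h (zi i) (b + b)).
  by move=> i; rewrite -segi; apply: uniq_nth_flatten.
have segdisj : forall i j : 'I_a, i != j ->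
   [disjoint traject h (zi i) (b + b) & traject h (zi j) (b + b)].
  move=> i j neq; rewrite -!segi; apply: flatten_disj => //; rewrite ?size_map ?sZs //.
have subA : forall i, [set y in traject h (zi i) b] \subset traject h (zi i) (b + b).
  by move=> i; apply/subsetP => y; rewrite inE (trajectD h) mem_cat => ->.
have subB : forall i, [set y in traject h (iter b h (zi i)) b] \subset traject h (zi i) (b + b).
  by move=> i; apply/subsetP => y; rewrite inE (trajectD h) mem_cat => ->; rewrite orbT.
exists (fun i => Walk X L1 L2 (b + b) (zi i)),
  (fun i => [set y in traject h (zi i) b]),
  (fun i => [set y in traject h (iter b h (zi i)) b]).
split.
- move=> i; have [sa sb] := seg_before s1 p1 d1 s2 p2 d2 XY b' (ziX i).
  split; first exact: (W1 s1 p1 d1 s2 p2 d2 _ (ziX i)).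
  rewrite eb; split => y; [move/sa; apply: mem_take | move/sb; apply: mem_drop].
- move=> v; rewrite big_map big_enum /=.
  have := cong s1 p1 d1 s2 p2 d2 (Zs := Zs) (len := fun _ => b + b) v.
  rewrite (big_nth z0) sZs big_mkord; apply => //.
- split.
    move=> i; rewrite !cardsE.
    have := useg i; rewrite (trajectD h) cat_uniq => /and3P[u1 _ u2].
    by rewrite (card_uniqP u1) (card_uniqP u2) !size_traject.
  move=> i j.
  have dAB : [disjoint [set y in traject h (zi i) b] & [set y in traject h (iter b h (zi j)) b]].
    have [<-|neq] := eqVneq i j.
      have := useg i; rewrite (trajectD h) cat_uniq => /and3P[_ /hasPn H _].
      apply: disjI => y; rewrite !inE => y1 y2.
      by have := H y y2; rewrite /= y1.
    exact: disjointW (subA i) (subB j) (segdisj i j neq).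
  split => // neq; split.
    exact: disjointW (subA i) (subA j) (segdisj i j neq).
  exact: disjointW (subB i) (subB j) (segdisj i j neq).
- move=> i; have [sa sb] := seg_before s1 p1 d1 s2 p2 d2 XY b' (ziX i).
  by exists (size (Walk X L1 L2 b' (zi i))); rewrite eb.
- apply: (wl_sub _ wlD); apply/subsetP => y /bigcupP [i _].
  rewrite inE => /orP [yA|yB]; apply: (subsetP XD); apply: sZs'; apply/flattenP.
    exists (traject h (zi i) (b + b)); [exact: map_f (ziZ i) | exact: (subsetP (subA i))].
  exists (traject h (zi i) (b + b)); [exact: map_f (ziZ i) | exact: (subsetP (subB i))].
Qed.
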